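(* Let $G=(V,E)$ be a $k$-edge-connected graph ($k>0$) and $\phi^*>0$. Suppose every induced subgraph $G[S]$ with $|S|\ge 2$ that is $k/20$-edge-connected and $1/4$-dense in $G$ satisfies $\phi(G[S])<\phi^*$. Then for every nonempty $U\subseteq V$, $$\log_2|U|\ \ge\ \frac{3/10-\phi_G(U)}{2\phi^*}.$$
   Context: Graphs are finite, undirected, unweighted, loopless, possibly with parallel edges; $k$-edge-connected means every cut $(S,\overline S)$, $\emptyset\ne S\subsetneq V$, has at least $k$ edges. For a graph $H$ and $S\subseteq V(H)$: $\partial_H(S)$ is the number of edges leaving $S$, $d_H(S)$ the sum of $H$-degrees of vertices in $S$, $\phi_H(S)=\partial_H(S)/d_H(S)$, and $\phi(H)=\min_{\emptyset\ne S\subsetneq V(H)}\partial_H(S)/\min\{d_H(S),d_H(V(H)\setminus S)\}$. An induced subgraph $H$ of $G$ is $\lambda$-dense if $d_H(v)\ge\lambda\,d_G(v)$ for every vertex $v$ of $H$. *)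

(* Defs.v *)
From mathcomp Require Import all_boot.
From Stdlib Require Import Reals.
Set Implicit Arguments. Unset Strict Implicit. Unset Printing Implicit Defensive.

(* A finite loopless multigraph on vertex type V is given by an edge
   multiplicity function m : V -> V -> nat, required (in the theorem) to be
   symmetric with m v v = 0.  Edge (u,v) has m u v parallel copies. *)

Section Graph.
Variables (V : finType) (m : V -> V -> nat).

Definition cut_in (S T : {set V}) : nat :=
  \sum_(u in T) \sum_(v in S :\: T) m u v.

Definition deg_in (S : {set V}) (v : V) : nat := \sum_(u in S) m v u.

Definition vol_in (S T : {set V}) : nat := \sum_(v in T) deg_in S v.

Definition edge_connected_in (S : {set V}) (c : R) : Prop :=
  forall T : {set V}, T \subset S -> T != set0 -> T != S ->
    Rle c (INR (cut_in S T)).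

Definition dense_in (S : {set V}) (lam : R) : Prop :=
  forall v, v \in S -> Rle (lam * INR (deg_in setT v)) (INR (deg_in S v)).

Definition proper_subsets (S : {set V}) : seq {set V} :=
  enum [set T : {set V} | (T \subset S) && (T != set0) && (T != S)].

(* conductance phi(G[S]) = min over emptyset <> T proper subset of S of
   cut / min(vol T, vol (S\T)); defined as 0 when there is no such T *)
Definition phi_ind (S : {set V}) : R :=
  match [seq Rdiv (INR (cut_in S T))
                  (Rmin (INR (vol_in S T)) (INR (vol_in S (S :\: T))))
        | T <- proper_subsets S] with
  | [::] => 0%R
  | x :: s => foldr Rmin x s
  end.

Definition phi_set (U : {set V}) : R :=
  Rdiv (INR (cut_in setT U)) (INR (vol_in setT U)).

End Graph.

Definition log2 (x : R) : R := Rdiv (ln x) (ln 2).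

(* Main.v *)
Require Import Defs.
From mathcomp Require Import all_boot.
From Stdlib Require Import Reals Lra Lia Classical.
From mathcomp Require Import zify.
Set Implicit Arguments. Unset Strict Implicit.

Lemma sum_disjU (V : finType) (A B : {set V}) (F : V -> nat) :
  [disjoint A & B] -> \sum_(i in A :|: B) F i = \sum_(i in A) F i + \sum_(i in B) F i.
Proof.
move=> dAB; rewrite -bigU //=; apply: eq_bigl => x; by rewrite !inE.
Qed.

Definition xcut (V : finType) (m : V -> V -> nat) (A B : {set V}) :=
  \sum_(u in A) \sum_(v in B) m u v.

Lemma xcut_sym (V : finType) (m : V -> V -> nat) (A B : {set V}) :
  (forall u v, m u v = m v u) -> xcut m A B = xcut m B A.
Proof.
move=> ms; rewrite /xcut exchange_big; apply: eq_bigr => i _; apply: eq_bigr => j _; exact: ms.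
Qed.

Lemma cut_union (V : finType) (m : V -> V -> nat) (A B : {set V}) :
  (forall u v, m u v = m v u) -> [disjoint A & B] ->
  cut_in m setT (A :|: B) + 2 * xcut m A B = cut_in m setT A + cut_in m setT B.
Proof.
move=> ms dAB.
set O := ~: (A :|: B).
have eA : setT :\: A = B :|: O.
  apply/setP => x; rewrite /O !inE; move: dAB => /disjoint_setI0 /setP /(_ x).
  rewrite !inE; by case: (x \in A); case: (x \in B).
have eB : setT :\: B = A :|: O.
  apply/setP => x; rewrite /O !inE; move: dAB => /disjoint_setI0 /setP /(_ x).
  rewrite !inE; by case: (x \in A); case: (x \in B).
have eU : setT :\: (A :|: B) = O by apply/setP => x; rewrite /O !inE andbT.
have dBO : [disjoint B & O].
  rewrite -setI_eq0; apply/eqP/setP => x; rewrite /O !inE; by case: (x \in A); case: (x \in B).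
have dAO : [disjoint A & O].
  rewrite -setI_eq0; apply/eqP/setP => x; rewrite /O !inE; by case: (x \in A); case: (x \in B).
rewrite /cut_in eA eB eU sum_disjU //.
have -> : \sum_(u in A) \sum_(v in B :|: O) m u v = xcut m A B + \sum_(u in A) \sum_(v in O) m u v.
  rewrite /xcut -big_split /=; apply: eq_bigr => i _; exact: sum_disjU.
have -> : \sum_(u in B) \sum_(v in A :|: O) m u v = xcut m B A + \sum_(u in B) \sum_(v in O) m u v.
  rewrite /xcut -big_split /=; apply: eq_bigr => i _; exact: sum_disjU.
rewrite (xcut_sym B A ms); lia.
Qed.

Lemma vol_union (V : finType) (m : V -> V -> nat) (S A B : {set V}) :
  [disjoint A & B] -> vol_in m S (A :|: B) = vol_in m S A + vol_in m S B.
Proof. move=> d; exact: sum_disjU. Qed.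

Lemma deg_sub (V : finType) (m : V -> V -> nat) (S : {set V}) v :
  deg_in m S v <= deg_in m setT v.
Proof.
rewrite /deg_in [X in _ <= X](big_setID S) /= setTI; exact: leq_addr.
Qed.

Lemma vol_sub (V : finType) (m : V -> V -> nat) (S A : {set V}) :
  vol_in m S A <= vol_in m setT A.
Proof. apply: leq_sum => i _; exact: deg_sub. Qed.

Lemma cut_le_vol (V : finType) (m : V -> V -> nat) (S T : {set V}) :
  cut_in m S T <= vol_in m S T.
Proof.
apply: leq_sum => u _; rewrite /deg_in [X in _ <= X](big_setID (S :\: T)) /=.
have -> : S :&: (S :\: T) = S :\: T by apply/setP => x; rewrite !inE; case: (x \in S); case: (x \in T).
exact: leq_addr.
Qed.
Definition Lf (p : R) (n : nat) : R := (3/10 - 2*p*log2 (INR n))%R.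

Lemma ln2_pos : (0 < ln 2)%R.
Proof. have := ln_lt_2; lra. Qed.

Lemma ln_le' (x y : R) : (0 < x)%R -> (x <= y)%R -> (ln x <= ln y)%R.
Proof.
move=> hx hxy; case: (Rle_lt_or_eq_dec _ _ hxy) => h.
  left; exact: ln_increasing.
by rewrite h; right.
Qed.

Lemma INR_pos (n : nat) : (1 <= n)%N -> (0 < INR n)%R.
Proof. move=> h; apply: lt_0_INR; apply/ltP; lia. Qed.

Lemma log2_mono (a b : nat) : (1 <= a)%N -> (a <= b)%N -> (log2 (INR a) <= log2 (INR b))%R.
Proof.
move=> ha hab; rewrite /log2 /Rdiv; apply: Rmult_le_compat_r.
  left; apply: Rinv_0_lt_compat; exact: ln2_pos.
apply: ln_le'; first exact: INR_pos.
apply: le_INR; apply/leP; lia.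
Qed.

Lemma log2_double (a b : nat) : (1 <= a)%N -> (2 * a <= b)%N -> (log2 (INR a) + 1 <= log2 (INR b))%R.
Proof.
move=> ha hab.
have h2 : (log2 (INR (2 * a)) <= log2 (INR b))%R by apply: log2_mono; lia.
suff -> : (log2 (INR a) + 1 = log2 (INR (2 * a)))%R by [].
have e2 : INR 2 = 2%R by simpl; ring.
rewrite /log2 mult_INR e2 ln_mult; [| lra | exact: INR_pos].
have := ln2_pos => hl; field; lra.
Qed.

Lemma log2_1 : log2 (INR 1) = 0%R.
Proof. rewrite /log2 /= ln_1 /Rdiv; ring. Qed.

Lemma Lf_mono p a b : (0 < p)%R -> (1 <= a)%N -> (a <= b)%N -> (Lf p b <= Lf p a)%R.
Proof. move=> hp ha hab; have := log2_mono ha hab; rewrite /Lf; nra. Qed.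

Lemma Lf_half p a b : (0 < p)%R -> (1 <= a)%N -> (2 * a <= b)%N -> (Lf p b + 2 * p <= Lf p a)%R.
Proof. move=> hp ha hab; have := log2_double ha hab; rewrite /Lf; nra. Qed.

Lemma Lf_le p a : (0 < p)%R -> (1 <= a)%N -> (Lf p a <= 3/10)%R.
Proof.
move=> hp ha; have := log2_mono (leqnn 1) ha; rewrite log2_1 /Lf; nra.
Qed.

Lemma Lf1 p : Lf p 1 = (3/10)%R.
Proof. rewrite /Lf log2_1; ring. Qed.

Lemma split_real p (k : R) (a b u : nat) (vA vB wA wB dA dB dU c : R) :
  (0 < p)%R -> (0 <= k)%R -> (1 <= a)%N -> (1 <= b)%N -> (a + b = u)%N ->
  (0 <= wA)%R -> (0 <= wB)%R -> (wA <= vA)%R -> (wB <= vB)%R ->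
  (dU + 2 * c = dA + dB)%R ->
  (Lf p a * vA + k / 10 <= dA)%R -> (Lf p b * vB + k / 10 <= dB)%R ->
  ((c < k / 20)%R \/ (c < p * Rmin wA wB)%R) ->
  (Lf p u * (vA + vB) + k / 10 <= dU)%R.
Proof.
move=> hp hk ha hb hu hwA hwB hvA hvB hd HA HB hc.
have mA : (Lf p u * vA <= Lf p a * vA)%R.
  apply: Rmult_le_compat_r; first lra; apply: Lf_mono => //; lia.
have mB : (Lf p u * vB <= Lf p b * vB)%R.
  apply: Rmult_le_compat_r; first lra; apply: Lf_mono => //; lia.
case: hc => hc; first lra.
case: (leqP a b) => hab.
- have hh : (Lf p u + 2 * p <= Lf p a)%R by apply: Lf_half => //; lia.
  have : (c < p * wA)%R.
    apply: (Rlt_le_trans _ _ _ hc); apply: Rmult_le_compat_l; [lra| exact: Rmin_l].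
  have : ((Lf p u + 2 * p) * vA <= Lf p a * vA)%R by apply: Rmult_le_compat_r; lra.
  nra.
- have hh : (Lf p u + 2 * p <= Lf p b)%R by apply: Lf_half => //; lia.
  have : (c < p * wB)%R.
    apply: (Rlt_le_trans _ _ _ hc); apply: Rmult_le_compat_l; [lra| exact: Rmin_r].
  have : ((Lf p u + 2 * p) * vB <= Lf p b * vB)%R by apply: Rmult_le_compat_r; lra.
  nra.
Qed.

Lemma loose_real p (k : R) (a u : nat) (vA d dA dU c : R) :
  (0 < p)%R -> (1 <= a)%N -> (a <= u)%N -> (0 <= d)%R -> (0 <= vA)%R ->
  (dU + 2 * c = dA + d)%R -> (c < 1/4 * d)%R ->
  (Lf p a * vA + k / 10 <= dA)%R ->
  (Lf p u * (vA + d) + k / 10 <= dU)%R.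
Proof.
move=> hp ha hau hd hvA hid hc HA.
have h1 : (Lf p u <= Lf p a)%R by apply: Lf_mono.
have h2 : (Lf p u <= 3/10)%R by apply: Lf_le => //; lia.
have h3 : (Lf p u * d <= 3/10 * d)%R by apply: Rmult_le_compat_r.
have : (Lf p u * vA <= Lf p a * vA)%R by apply: Rmult_le_compat_r.
lra.
Qed.
Lemma fold_aux (X : eqType) (f : X -> R) (a : X) (s : seq X) (p : R) :
  (foldr Rmin (f a) (map f s) < p)%R -> exists2 T, T \in a :: s & (f T < p)%R.
Proof.
elim: s => [|b s IH] /= h; first by exists a; rewrite ?inE ?eqxx.
move: h; rewrite /Rmin; case: Rle_dec => _ h.
  by exists b; rewrite // !inE eqxx orbT.
case: (IH h) => T; rewrite inE => /orP [/eqP -> | hT] hf.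
  by exists a; rewrite ?inE ?eqxx.
by exists T; rewrite // !inE hT !orbT.
Qed.

Lemma phi_ind_wit (V : finType) (m : V -> V -> nat) (S T0 : {set V}) (p : R) :
  T0 \subset S -> T0 != set0 -> T0 != S -> (phi_ind m S < p)%R ->
  exists T : {set V}, [/\ T \subset S, T != set0, T != S &
    (INR (cut_in m S T) / Rmin (INR (vol_in m S T)) (INR (vol_in m S (S :\: T))) < p)%R].
Proof.
move=> h1 h2 h3; rewrite /phi_ind.
have hm : forall T : {set V}, T \in proper_subsets S -> [/\ T \subset S, T != set0 & T != S].
  by move=> T; rewrite /proper_subsets mem_enum inE => /andP [/andP [-> ->] ->].
have : T0 \in proper_subsets S by rewrite /proper_subsets mem_enum inE h1 h2 h3.
move: hm; case: (proper_subsets S) => [//|a s] hm _ /= h.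
case: (fold_aux h) => T hT hf.
have [g1 g2 g3] := hm T hT.
by exists T; split.
Qed.

Lemma cut_single (V : finType) (m : V -> V -> nat) v :
  m v v = 0 -> cut_in m setT [set v] = deg_in m setT v.
Proof.
move=> h; rewrite /cut_in big_set1 /deg_in [in RHS](big_setD1 v) ?inE // h.
by [].
Qed.

Lemma deg_ge_k (V : finType) (m : V -> V -> nat) (k : nat) v :
  (forall v, m v v = 0) -> (2 <= #|V|)%N -> edge_connected_in m setT (INR k) ->
  (INR k <= INR (deg_in m setT v))%R.
Proof.
move=> m0 hV hc; rewrite -cut_single //; apply: hc.
- exact: subsetT.
- by apply/set0Pn; exists v; rewrite inE.
- apply/eqP => h; have := cards1 v; rewrite h cardsT; lia.
Qed.

Lemma parts (V : finType) (T U : {set V}) :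
  T \subset U -> T != set0 -> T != U ->
  [/\ [disjoint T & U :\: T], T :|: (U :\: T) = U, U :\: T != set0,
      (1 <= #|T|)%N & (1 <= #|U :\: T|)%N /\ (#|T| + #|U :\: T| = #|U|)%N].
Proof.
move=> hTU hT0 hTn.
have d : [disjoint T & U :\: T].
  rewrite -setI_eq0; apply/eqP/setP => x; rewrite !inE; by case: (x \in T).
have e : T :|: (U :\: T) = U.
  apply/setP => x; rewrite !inE; case hx: (x \in T) => //=.
  by rewrite (subsetP hTU x hx).
have n0 : U :\: T != set0.
  apply/negP => /eqP h; move: h => /eqP; rewrite setD_eq0 => hUT.
  by move: hTn; rewrite eqEsubset hTU hUT.
have c := cardsID T U; rewrite (setIidPr hTU) in c.
split => //; [by rewrite card_gt0 | split; [by rewrite card_gt0 | by rewrite c]].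
Qed.

Definition bound (V : finType) (m : V -> V -> nat) (k : nat) (p : R) (U : {set V}) :=
  (Lf p #|U| * INR (vol_in m setT U) + INR k / 10 <= INR (cut_in m setT U))%R.

Lemma split_set (V : finType) (m : V -> V -> nat) (k : nat) (p : R) (T U : {set V}) :
  (forall u v, m u v = m v u) -> (0 < p)%R ->
  T \subset U -> T != set0 -> T != U ->
  bound m k p T -> bound m k p (U :\: T) ->
  ((INR (cut_in m U T) < INR k / 20)%R \/
   (INR (cut_in m U T) < p * Rmin (INR (vol_in m U T)) (INR (vol_in m U (U :\: T))))%R) ->
  bound m k p U.
Proof.
move=> ms hp h1 h2 h3 HA HB hc.
have [d e n0 c1 [c2 c3]] := parts h1 h2 h3.
have hcut := cut_union ms d; rewrite e in hcut.
have hvol := vol_union m setT d; rewrite e in hvol.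
rewrite /bound hvol plus_INR.
apply: (split_real (a := #|T|) (b := #|U :\: T|) (c := INR (cut_in m U T))
          (dA := INR (cut_in m setT T)) (dB := INR (cut_in m setT (U :\: T)))
          (wA := INR (vol_in m U T)) (wB := INR (vol_in m U (U :\: T)))) => //.
- exact: pos_INR.
- exact: pos_INR.
- exact: pos_INR.
- apply: le_INR; apply/leP; exact: vol_sub.
- apply: le_INR; apply/leP; exact: vol_sub.
- have -> : (2 * INR (cut_in m U T))%R = INR (2 * xcut m T (U :\: T)) by rewrite mult_INR.
  rewrite -plus_INR -plus_INR; f_equal; exact: hcut.
Qed.

Lemma xcut_single (V : finType) (m : V -> V -> nat) (U : {set V}) v :
  (forall u v, m u v = m v u) -> (forall v, m v v = 0) -> v \in U ->
  xcut m (U :\ v) [set v] = deg_in m U v.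
Proof.
move=> ms m0 hv; rewrite /xcut /deg_in [in RHS](big_setD1 v) // m0 /=.
by apply: eq_bigr => u _; rewrite big_set1 ms.
Qed.

Lemma key (V : finType) (m : V -> V -> nat) (k : nat) (p : R) :
  (forall u v, m u v = m v u) ->
  (forall v, m v v = 0%N) ->
  (2 <= #|V|)%N ->
  (0 < k)%N ->
  edge_connected_in m setT (INR k) ->
  Rlt 0 p ->
  (forall S : {set V}, (2 <= #|S|)%N ->
     edge_connected_in m S (Rdiv (INR k) 20) ->
     dense_in m S (Rdiv 1 4) ->
     Rlt (phi_ind m S) p) ->
  forall n (U : {set V}), (#|U| <= n)%N -> U != set0 -> bound m k p U.
Proof.
move=> ms m0 hV hk hconn hp hgood n.
have hkR : (0 < INR k)%R by apply: INR_pos.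
elim: n => [|n IH] U hU hU0.
  by move: hU0; rewrite -card_gt0; lia.
have [/cards1P [v ->] | hU1] := boolP (#|U| == 1).
  rewrite /bound cards1 Lf1 /vol_in big_set1 cut_single //.
  have := deg_ge_k v m0 hV hconn; lra.
have hU2 : (2 <= #|U|)%N by move: hU0 hU1; rewrite -card_gt0; lia.
have IH' : forall W : {set V}, W != set0 -> (#|W| < #|U|)%N -> bound m k p W.
  move=> W hW hWU; apply: IH => //; lia.
have IHT : forall T : {set V}, T \subset U -> T != set0 -> T != U -> bound m k p T /\ bound m k p (U :\: T).
  move=> T h1 h2 h3; have [d e n0 c1 [c2 c3]] := parts h1 h2 h3.
  split; apply: IH' => //; lia.
case: (classic (exists T : {set V}, [/\ T \subset U, T != set0, T != U &
           (INR (cut_in m U T) < INR k / 20)%R])) => [[T [h1 h2 h3 h4]] | Hno].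
  have [HA HB] := IHT T h1 h2 h3.
  by apply: (split_set ms hp h1 h2 h3 HA HB); left.
case: (classic (exists v : V, v \in U /\ (INR (deg_in m U v) < 1/4 * INR (deg_in m setT v))%R))
  => [[v [hv hlt]] | Hno2].
  set A := U :\ v.
  have hA0 : A != set0 by rewrite /A -card_gt0; move: hU2; rewrite (cardsD1 v U) hv; lia.
  have hAc : (#|A| + 1 = #|U|)%N by rewrite /A (cardsD1 v U) hv; lia.
  have HA : bound m k p A by apply: IH' => //; lia.
  have d : [disjoint A & [set v]].
    rewrite -setI_eq0; apply/eqP/setP => x; rewrite /A !inE; by case: (x == v); case: (x \in U).
  have e : A :|: [set v] = U by rewrite setUC setD1K.
  have hcut := cut_union ms d; rewrite e xcut_single // cut_single // in hcut.
  have hvol := vol_union m setT d; rewrite e /vol_in big_set1 in hvol.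
  rewrite /bound /vol_in hvol plus_INR.
  apply: (loose_real (a := #|A|) (dA := INR (cut_in m setT A)) (c := INR (deg_in m U v))) => //.
  - by move: hA0; rewrite -card_gt0.
  - lia.
  - exact: pos_INR.
  - exact: pos_INR.
  - have -> : (2 * INR (deg_in m U v))%R = INR (2 * deg_in m U v) by rewrite mult_INR.
    rewrite -!plus_INR; f_equal; exact: hcut.
have hc : edge_connected_in m U (INR k / 20).
  move=> T h1 h2 h3; apply: Rnot_lt_le => h4; apply: Hno; by exists T.
have hd : dense_in m U (1 / 4).
  move=> v hv; apply: Rnot_lt_le => h4; apply: Hno2; by exists v.
have hphi := hgood U hU2 hc hd.
have [v hv] := set0Pn _ hU0.
have hT0a : [set v] \subset U by rewrite sub1set.
have hT0b : [set v] != set0 by apply/set0Pn; exists v; rewrite inE.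
have hT0c : [set v] != U by apply/eqP => h; move: hU2; rewrite -h cards1.
have [T [h1 h2 h3 hr]] := phi_ind_wit hT0a hT0b hT0c hphi.
have [HA HB] := IHT T h1 h2 h3.
apply: (split_set ms hp h1 h2 h3 HA HB); right.
have hck := hc T h1 h2 h3.
have hcpos : (0 < INR (cut_in m U T))%R by lra.
have hsym : cut_in m U (U :\: T) = cut_in m U T.
  rewrite /cut_in; have -> : U :\: (U :\: T) = T.
    apply/setP => x; rewrite !inE; case hx: (x \in T) => /=; last by case: (x \in U).
    by rewrite (subsetP h1 x hx).
  exact: xcut_sym.
have hm1 : (INR (cut_in m U T) <= INR (vol_in m U T))%R by apply: le_INR; apply/leP; exact: cut_le_vol.
have hm2 : (INR (cut_in m U T) <= INR (vol_in m U (U :\: T)))%R.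
  rewrite -hsym; apply: le_INR; apply/leP; exact: cut_le_vol.
set c := INR (cut_in m U T) in hr hcpos hm1 hm2 *.
set mn := Rmin _ _ in hr *.
have hmn : (c <= mn)%R by apply: Rmin_glb.
have hmnp : (0 < mn)%R by lra.
have := Rmult_lt_compat_r mn _ _ hmnp hr.
have -> : (c / mn * mn = c)%R by field; lra.
lra.
Qed.

Unset Implicit Arguments.

Theorem mainTheorem10 (V : finType) (m : V -> V -> nat) (k : nat) (phistar : R) :
  (forall u v, m u v = m v u) ->
  (forall v, m v v = 0%N) ->
  (2 <= #|V|)%N ->
  (0 < k)%N ->
  edge_connected_in m setT (INR k) ->
  Rlt 0 phistar ->
  (forall S : {set V}, (2 <= #|S|)%N ->
     edge_connected_in m S (Rdiv (INR k) 20) ->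
     dense_in m S (Rdiv 1 4) ->
     Rlt (phi_ind m S) phistar) ->
  forall U : {set V}, U != set0 ->
    Rle (Rdiv (Rminus (Rdiv 3 10) (phi_set m U)) (Rmult 2 phistar))
        (log2 (INR #|U|)).
Proof.
move=> ms m0 hV hk hconn hp hgood U hU0.
have hb := key ms m0 hV hk hconn hp hgood (leqnn #|U|) hU0.
have [v hv] := set0Pn _ hU0.
have hkR : (0 < INR k)%R by apply: INR_pos.
have hdv := deg_ge_k v m0 hV hconn.
have hvol : (INR (deg_in m setT v) <= INR (vol_in m setT U))%R.
  apply: le_INR; apply/leP; rewrite /vol_in (big_setD1 v) //=; exact: leq_addr.
rewrite /bound in hb; rewrite /phi_set.
set vo := INR (vol_in m setT U) in hb hvol *.
set cu := INR (cut_in m setT U) in hb *.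
have hvo : (0 < vo)%R by lra.
have hphi : (Lf phistar #|U| <= cu / vo)%R.
  apply: (Rmult_le_reg_r vo) => //.
  have -> : (cu / vo * vo = cu)%R by field; lra.
  have := pos_INR k; lra.
move: hphi; rewrite /Lf => hphi.
apply: (Rmult_le_reg_r (2 * phistar)); first lra.
have -> : ((3 / 10 - cu / vo) / (2 * phistar) * (2 * phistar) = 3 / 10 - cu / vo)%R by field; lra.
lra.
Qed.
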